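(* There exists a polynomial-time computable function $f$ that maps every PDL-formula to a variable-free PDL-formula such that, for every PDL-formula $\varphi$, $\varphi\in\mathbf{PDL}$ if, and only if, $f(\varphi)\in\mathbf{PDL}$ (i.e., $\mathbf{PDL}$ embeds into its variable-free fragment in polynomial time).
   Context: Fix a countable set $\mathit{Var}=\{p_1,p_2,\ldots\}$ of propositional variables and a countable set $AP=\{a_1,a_2,\ldots\}$ of atomic program terms. PDL formulas and program terms are defined simultaneously by $\varphi ::= p \mid \bot \mid (\varphi\rightarrow\varphi)\mid [\alpha]\varphi$ and $\alpha ::= a \mid (\alpha;\alpha)\mid(\alpha\cup\alpha)\mid \alpha^*$ ($p\in\mathit{Var}$, $a\in AP$). A Kripke model is $\mathfrak{M}=(S,\{R_a\}_{a\in AP},V)$, $S\neq\varnothing$, $R_a\subseteq S\times S$, $V:\mathit{Var}\to2^S$; $R_{\alpha;\beta}$ is the relational composition of $R_\alpha$ and $R_\beta$; $R_{\alpha\cup\beta}=R_\alpha\cup R_\beta$; $R_{\alpha^*}$ is the reflexive transitive closure of $R_\alpha$; $\mathfrak{M},s\models p$ iff $s\in V(p)$; $\bot$ is never true; $\rightarrow$ is classical; $\mathfrak{M},s\models[\alpha]\psi$ iff $\psi$ holds at all $R_\alpha$-successors of $s$. A formula is valid if it is true at every state of every model; $\mathbf{PDL}$ is the set of valid PDL-formulas. A formula is variable-free if it contains no propositional variables; the variable-free fragment of $\mathbf{PDL}$ is the set of variable-free formulas in $\mathbf{PDL}$. *)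

(* Defs.v *)
From mathcomp Require Import all_boot.
From Stdlib Require Import Relations BinPos.

Unset Printing Implicit Defensive.

Inductive prog : Type :=
| PAtom : nat -> prog
| PSeq  : prog -> prog -> prog
| PCup  : prog -> prog -> prog
| PStar : prog -> prog.

Inductive form : Type :=
| FVar : nat -> form
| FBot : form
| FImp : form -> form -> form
| FBox : prog -> form -> form.

Fixpoint var_free (phi : form) : Prop :=
  match phi with
  | FVar _ => False
  | FBot => True
  | FImp a b => var_free a /\ var_free b
  | FBox _ b => var_free b
  end.

Record kmodel := KModel {
  kS : Type;
  kR : nat -> kS -> kS -> Prop;
  kV : nat -> kS -> Prop }.

Fixpoint prog_rel (M : kmodel) (a : prog) : kS M -> kS M -> Prop :=
  match a with
  | PAtom i => kR M i
  | PSeq a b => fun s u => exists t, prog_rel M a s t /\ prog_rel M b t u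
  | PCup a b => fun s u => prog_rel M a s u \/ prog_rel M b s u
  | PStar a => clos_refl_trans (kS M) (prog_rel M a)
  end.

Fixpoint sat (M : kmodel) (s : kS M) (phi : form) : Prop :=
  match phi with
  | FVar i => kV M i s
  | FBot => False
  | FImp a b => sat M s a -> sat M s b
  | FBox a b => forall t, prog_rel M a s t -> sat M t b
  end.

(* phi \in PDL: true at every state of every model (the state s
   witnesses nonemptiness of the carrier). *)
Definition pdl_valid (phi : form) : Prop :=
  forall (M : kmodel) (s : kS M), sat M s phi.

(* (Polish notation; indices written in binary).                    *)

Inductive sym : Type :=
| SVar | SProg | SBot | SImp | SBox | SSeq | SCup | SStar | S0 | S1 | SEnd.

Fixpoint pos_bits (p : positive) : seq sym :=
  match p with
  | xH => [::]
  | xO q => S0 :: pos_bits q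
  | xI q => S1 :: pos_bits q
  end.

(* binary code of i+1 (least significant bit first), terminated by SEnd *)
Definition enc_nat (i : nat) : seq sym :=
  S1 :: pos_bits (Pos.of_succ_nat i) ++ [:: SEnd].

Fixpoint enc_prog (a : prog) : seq sym :=
  match a with
  | PAtom i => SProg :: enc_nat i
  | PSeq a b => SSeq :: enc_prog a ++ enc_prog b
  | PCup a b => SCup :: enc_prog a ++ enc_prog b
  | PStar a => SStar :: enc_prog a
  end.

Fixpoint enc_form (phi : form) : seq sym :=
  match phi with
  | FVar i => SVar :: enc_nat i
  | FBot => [:: SBot]
  | FImp a b => SImp :: enc_form a ++ enc_form b
  | FBox a b => SBox :: enc_prog a ++ enc_form b
  end.

Inductive dir : Type := DLeft | DRight | DStay.

Record TM := {
  tm_Q : finType;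
  tm_G : finType;
  tm_start : tm_Q;
  tm_halt : tm_Q;
  tm_blank : tm_G;
  tm_in : sym -> tm_G;
  tm_out : tm_G -> option sym;
  tm_delta : tm_Q -> tm_G -> tm_Q * tm_G * dir }.

(* configuration: state, cells left of head (nearest first),
   scanned cell, cells right of head *)
Definition config (M : TM) : Type :=
  (tm_Q M * seq (tm_G M) * tm_G M * seq (tm_G M))%type.

Definition tm_init (M : TM) (w : seq sym) : config M :=
  match map (tm_in M) w with
  | [::] => (tm_start M, [::], tm_blank M, [::])
  | x :: r => (tm_start M, [::], x, r)
  end.

Definition tm_step (M : TM) (c : config M) : config M :=
  let: (q, l, x, r) := c in
  if q == tm_halt M then c else
  let: (q', y, d) := tm_delta M q x in
  match d with
  | DStay => (q', l, y, r)
  | DLeft =>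
      match l with
      | [::] => (q', [::], tm_blank M, y :: r)
      | z :: l' => (q', l', z, y :: r)
      end
  | DRight =>
      match r with
      | [::] => (q', y :: l, tm_blank M, [::])
      | z :: r' => (q', y :: l, z, r')
      end
  end.

Definition tm_run (M : TM) (t : nat) (w : seq sym) : config M :=
  iter t ((@tm_step M)) (tm_init M w).

Fixpoint read_out (M : TM) (s : seq (tm_G M)) : seq sym :=
  match s with
  | [::] => [::]
  | g :: s' => match tm_out M g with
               | Some a => a :: read_out M s'
               | None => [::]
               end
  end.

Definition tm_halted_with (M : TM) (c : config M) (out : seq sym) : Prop :=
  let: (q, _, x, r) := c in q = tm_halt M /\ read_out M (x :: r) = out.

Definition poly_time_form_fun (f : form -> form) : Prop :=
  exists (M : TM) (c k : nat), forall phi : form,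
    exists t, t <= c * (size (enc_form phi)) ^ k + c /\
      tm_halted_with M (tm_run M t (enc_form phi)) (enc_form (f phi)).

(* Main.v *)
Require Import Defs.
From HB Require Import structures.
From mathcomp Require Import all_boot zify.
From Stdlib Require Import Relations BinPos Classical Lia.


Definition sym_code (s : sym) : bool * bool * bool * bool :=
  match s with
  | SVar => (false,false,false,false) | SProg => (false,false,false,true)
  | SBot => (false,false,true,false) | SImp => (false,false,true,true)
  | SBox => (false,true,false,false) | SSeq => (false,true,false,true)
  | SCup => (false,true,true,false) | SStar => (false,true,true,true)
  | S0 => (true,false,false,false) | S1 => (true,false,false,true)
  | SEnd => (true,false,true,false) end.
Definition sym_decode (c : bool * bool * bool * bool) : option sym :=
  match c with
  | (false,false,false,false) => Some SVar | (false,false,false,true) => Some SProg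
  | (false,false,true,false) => Some SBot | (false,false,true,true) => Some SImp
  | (false,true,false,false) => Some SBox | (false,true,false,true) => Some SSeq
  | (false,true,true,false) => Some SCup | (false,true,true,true) => Some SStar
  | (true,false,false,false) => Some S0 | (true,false,false,true) => Some S1
  | (true,false,true,false) => Some SEnd | _ => None end.
Lemma sym_codeK : pcancel sym_code sym_decode. Proof. by case. Qed.
HB.instance Definition _ := Finite.copy sym (pcan_type sym_codeK).

Inductive GS := GN | GAP | GAV | GIV.
Definition gs_code (g : GS) : bool * bool :=
  match g with GN => (false,false) | GAP => (false,true) | GAV => (true,false) | GIV => (true,true) end.
Definition gs_decode (c : bool * bool) : option GS :=
  Some (match c with (false,false) => GN | (false,true) => GAP | (true,false) => GAV | (true,true) => GIV end).
Lemma gs_codeK : pcancel gs_code gs_decode. Proof. by case. Qed.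
HB.instance Definition _ := Finite.copy GS (pcan_type gs_codeK).

Inductive TG := GBlank | GDead | GIn of sym | GOut of sym.
Definition tg_code (x : TG) : option (option (bool * sym)) :=
  match x with GBlank => None | GDead => Some None
  | GIn s => Some (Some (true, s)) | GOut s => Some (Some (false, s)) end.
Definition tg_decode (c : option (option (bool * sym))) : option TG :=
  Some (match c with None => GBlank | Some None => GDead
  | Some (Some (true, s)) => GIn s | Some (Some (false, s)) => GOut s end).
Lemma tg_codeK : pcancel tg_code tg_decode. Proof. by case=> [||[]|[]]. Qed.
HB.instance Definition _ := Finite.copy TG (pcan_type tg_codeK).

Inductive TQ := QF of GS | QC of GS & option sym & option sym | QR of GS | QH.
Definition tq_code (q : TQ) : option ((GS + GS) + (GS * option sym * option sym)) :=
  match q with QF g => Some (inl (inl g)) | QR g => Some (inl (inr g))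
  | QC g a b => Some (inr (g, a, b)) | QH => None end.
Definition tq_decode (c : option ((GS + GS) + (GS * option sym * option sym))) : option TQ :=
  Some (match c with Some (inl (inl g)) => QF g | Some (inl (inr g)) => QR g
  | Some (inr (g, a, b)) => QC g a b | None => QH end).
Lemma tq_codeK : pcancel tq_code tq_decode. Proof. by case. Qed.
HB.instance Definition _ := Finite.copy TQ (pcan_type tq_codeK).

Definition gstep (g : GS) (s : sym) : GS * option sym * option sym :=
  match g with
  | GN => match s with
          | SProg => (GAP, Some SProg, None)
          | SVar => (GAV, Some SBox, Some SProg)
          | _ => (GN, Some s, None) end
  | GAP => (GN, Some s, Some S0)
  | GAV => (GIV, Some s, Some S1)
  | GIV => match s with
          | SEnd => (GN, Some SEnd, Some SBot)
          | _ => (GIV, Some s, None) end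
  end.

Definition pl (o1 o2 : option sym) : seq sym :=
  match o1 with None => [::] | Some c => c :: (match o2 with None => [::] | Some e => [:: e] end) end.

Fixpoint gsm_run (g : GS) (u : seq sym) : seq sym :=
  match u with
  | [::] => [::]
  | b :: u' => let: (g', o1, o2) := gstep g b in pl o1 o2 ++ gsm_run g' u'
  end.

Definition delta (q : TQ) (x : TG) : TQ * TG * dir :=
  match q with
  | QF g => match x with
            | GIn a => let: (g', o1, o2) := gstep g a in (QC g' o1 o2, GDead, DRight)
            | _ => (QH, x, DStay) end
  | QC g o1 o2 => match x with
            | GBlank => match o1 with
                        | Some c => (QC g o2 None, GOut c, DRight)
                        | None => (QR g, GBlank, DStay) end
            | _ => (QC g o1 o2, x, DRight) end
  | QR g => match x with
            | GDead => (QF g, GDead, DRight)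
            | _ => (QR g, x, DLeft) end
  | QH => (QH, x, DStay)
  end.

Definition gout (x : TG) : option sym := match x with GOut s => Some s | _ => None end.

Definition M0 : TM := {| tm_Q := TQ; tm_G := TG; tm_start := QF GN; tm_halt := QH;
  tm_blank := GBlank; tm_in := GIn; tm_out := gout; tm_delta := delta |}.

Definition step := tm_step M0.

Lemma neqH (q : TQ) : q <> QH -> (q == QH) = false.
Proof. by move=> h; apply/eqP. Qed.

Lemma stepR q l x r q' y : q <> QH -> delta q x = (q', y, DRight) ->
  step (q, l, x, r) = (q', y :: l, head GBlank r, behead r).
Proof. move=> hq hd; rewrite /step /tm_step /= neqH // hd; by case: r. Qed.

Lemma stepL q l z x r q' y : q <> QH -> delta q x = (q', y, DLeft) ->
  step (q, z :: l, x, r) = (q', l, z, y :: r).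
Proof. move=> hq hd; by rewrite /step /tm_step /= neqH // hd. Qed.

Lemma stepS q l x r q' y : q <> QH -> delta q x = (q', y, DStay) ->
  step (q, l, x, r) = (q', l, y, r).
Proof. move=> hq hd; by rewrite /step /tm_step /= neqH // hd. Qed.


Definition nb (x : TG) : bool := if x is GBlank then false else true.
Definition nd (x : TG) : bool := if x is GDead then false else true.

Lemma nseq_hd m : head GBlank (nseq m GBlank) = GBlank /\ behead (nseq m GBlank) = nseq m.-1 GBlank.
Proof. by case: m. Qed.

Lemma move_right g o1 o2 s l m : all nb s ->
  iter (size s) step (QC g o1 o2, l, head GBlank (s ++ nseq m GBlank), behead (s ++ nseq m GBlank))
  = (QC g o1 o2, rev s ++ l, GBlank, nseq m.-1 GBlank).
Proof.
elim: s l => [|y s IH] l; first by case: m.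
move=> /= /andP[hy hs]; rewrite -iterS iterSr (stepR _ _ _ _ (QC g o1 o2) (y)) //; last by case: y hy.
by rewrite IH // rev_cons cat_rcons.
Qed.

Lemma write_out g o1 o2 L k :
  iter (size (pl o1 o2)).+1 step (QC g o1 o2, L, GBlank, nseq k GBlank)
  = (QR g, rev (map GOut (pl o1 o2)) ++ L, GBlank, nseq (k - size (pl o1 o2)) GBlank).
Proof.
case: o1 => [c|]; first last.
  rewrite [pl _ _]/= [size _]/= iterS [iter 0 _ _]/=.
  by rewrite (stepS _ _ _ _ (QR g) (GBlank)) // subn0.
case: o2 => [e|]; rewrite [pl _ _]/= [size _]/= !iterS [iter 0 _ _]/=.
  rewrite (stepR _ _ _ _ (QC g (Some e) None) (GOut c)) //; case: (nseq_hd k) => -> ->.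
  rewrite (stepR _ _ _ _ (QC g None None) (GOut e)) //.
  case: (nseq_hd k.-1) => -> ->; rewrite (stepS _ _ _ _ (QR g) (GBlank)) //.
  by rewrite -!subn1 -subnDA.
rewrite (stepR _ _ _ _ (QC g None None) (GOut c)) //; case: (nseq_hd k) => -> ->.
by rewrite (stepS _ _ _ _ (QR g) (GBlank)) // subn1.
Qed.

Lemma move_left g t L x r : all nd t -> nd x ->
  iter (size t).+1 step (QR g, t ++ GDead :: L, x, r) = (QR g, L, GDead, rev t ++ x :: r).
Proof.
elim: t x r => [|y t IH] x r.
  by move=> _ hx; rewrite iterS [iter 0 _ _]/= cat0s (stepL _ _ _ _ _ (QR g) (x)) //; case: x hx.
move=> /= /andP[hy ht] hx; rewrite -iterS iterSr (stepL _ _ _ _ _ (QR g) (x)) //; last by case: x hx.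
by rewrite -iterS IH // rev_cons cat_rcons.
Qed.

Lemma iter1 (T : Type) (f : T -> T) x : iter 1 f x = f x. Proof. by []. Qed.

Definition mk (q : TQ) (l : seq TG) (w : seq TG) : config M0 :=
  (q, l, head GBlank w, behead w).

Lemma round g a b u o m : exists k m', k <= 8 + 2 * size u + 2 * size o /\
  iter k step (mk (QF g) (nseq a GDead) (map GIn (b :: u) ++ map GOut o ++ nseq m GBlank))
  = let: (g', o1, o2) := gstep g b in
    mk (QF g') (nseq a.+1 GDead) (map GIn u ++ map GOut (o ++ pl o1 o2) ++ nseq m' GBlank).
Proof.
case E: (gstep g b) => [[g' o1] o2].
set s := map GIn u ++ map GOut o.
have hs : all nb s by rewrite all_cat; apply/andP; split; apply/allP=> x /mapP[y _ ->].
have hs' : all nd s by rewrite all_cat; apply/andP; split; apply/allP=> x /mapP[y _ ->].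
set ps := pl o1 o2.
have hps : size ps <= 2 by rewrite /ps; case: (o1) => [?|] //; case: (o2).
exists (1 + (size (rev (map GOut ps) ++ rev s)).+1 + (size ps).+1 + size s + 1), (m.-1 - size ps).+1.
split.
  rewrite size_cat !size_rev size_map /s size_cat !size_map; lia.
rewrite !iterD /mk !iter1 (stepR _ _ (GIn b) _ (QC g' o1 o2) (GDead)) //; last by rewrite /= E.
have -> : behead (map GIn (b :: u) ++ map GOut o ++ nseq m GBlank) = s ++ nseq m GBlank.
  by rewrite /s -catA.
rewrite move_right // write_out.
rewrite [X in (QR _, X, _, _)]catA move_left //; first last.
  by rewrite all_cat !all_rev hs' andbT; apply/allP=> x /mapP[y _ ->].
rewrite (stepR _ _ _ _ (QF g') (GDead)) // !rev_cat !revK /=.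
rewrite /s map_cat -!catA /=.
by case: (m.-1 - size ps).
Qed.


Fixpoint trp (a : prog) : prog :=
  match a with
  | PAtom j => PAtom j.*2.+1
  | PSeq a b => PSeq (trp a) (trp b)
  | PCup a b => PCup (trp a) (trp b)
  | PStar a => PStar (trp a)
  end.

Fixpoint trf (phi : form) : form :=
  match phi with
  | FVar i => FBox (PAtom i.*2.+2) FBot
  | FBot => FBot
  | FImp a b => FImp (trf a) (trf b)
  | FBox a b => FBox (trp a) (trf b)
  end.

Lemma trf_vf phi : var_free (trf phi).
Proof. by elim: phi => //= a IHa b IHb. Qed.

Lemma pos_odd j : Pos.of_succ_nat (j.*2.+1) = xO (Pos.of_succ_nat j).
Proof. by elim: j => //= j IH; rewrite IH. Qed.

Lemma pos_even j : Pos.of_succ_nat (j.*2.+2) = xI (Pos.of_succ_nat j).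
Proof. by elim: j => //= j IH; rewrite IH. Qed.

Lemma pos_odd' j : Pos.succ (Pos.of_succ_nat j.*2) = xO (Pos.of_succ_nat j).
Proof. exact: pos_odd. Qed.
Lemma pos_even' j : Pos.succ (Pos.succ (Pos.of_succ_nat j.*2)) = xI (Pos.of_succ_nat j).
Proof. exact: pos_even. Qed.

Lemma gsm_bits_N p rest : gsm_run GN (pos_bits p ++ SEnd :: rest) = pos_bits p ++ SEnd :: gsm_run GN rest.
Proof. by elim: p => //= p IH; rewrite IH. Qed.

Lemma gsm_bits_IV p rest : gsm_run GIV (pos_bits p ++ SEnd :: rest) = pos_bits p ++ SEnd :: SBot :: gsm_run GN rest.
Proof. by elim: p => //= p IH; rewrite IH. Qed.

Lemma enc_odd j : enc_nat (j.*2.+1) = S1 :: S0 :: pos_bits (Pos.of_succ_nat j) ++ [:: SEnd].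
Proof. by rewrite /enc_nat pos_odd. Qed.
Lemma enc_even j : enc_nat (j.*2.+2) = S1 :: S1 :: pos_bits (Pos.of_succ_nat j) ++ [:: SEnd].
Proof. by rewrite /enc_nat pos_even. Qed.
Arguments enc_nat : simpl never.

Lemma gsm_prog a rest : gsm_run GN (enc_prog a ++ rest) = enc_prog (trp a) ++ gsm_run GN rest.
Proof.
elim: a rest => [j|a IHa b IHb|a IHa b IHb|a IHa] rest.
- rewrite /= pos_odd' /= -catA gsm_bits_N; by rewrite -catA.
- by rewrite /= -catA IHa IHb catA.
- by rewrite /= -catA IHa IHb catA.
- by rewrite /= IHa.
Qed.

Lemma gsm_form phi rest : gsm_run GN (enc_form phi ++ rest) = enc_form (trf phi) ++ gsm_run GN rest.
Proof.
elim: phi rest => [i||a IHa b IHb|a b IHb] rest.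
- rewrite /= pos_even' /= -catA gsm_bits_IV; by rewrite -!catA.
- by [].
- by rewrite /= -catA IHa IHb catA.
- by rewrite /= -catA gsm_prog IHb catA.
Qed.

Lemma gsm_enc phi : gsm_run GN (enc_form phi) = enc_form (trf phi).
Proof. by have := gsm_form phi [::]; rewrite !cats0. Qed.

Lemma crt_imp (T : Type) (R S : T -> T -> Prop) :
  (forall x y, R x y -> S x y) -> forall x y, clos_refl_trans T R x y -> clos_refl_trans T S x y.
Proof.
move=> h x y; elim=> [x0 y0 /h H|x0|x0 y0 z0 _ H1 _ H2].
- exact: rt_step.
- exact: rt_refl.
- exact: rt_trans H1 H2.
Qed.

Lemma crt_iff (T : Type) (R S : T -> T -> Prop) :
  (forall x y, R x y <-> S x y) -> forall x y, clos_refl_trans T R x y <-> clos_refl_trans T S x y.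
Proof.
move=> h x y; split; apply: crt_imp => ?? /h //.
Qed.

Definition Mfwd (M : kmodel) : kmodel :=
  KModel (kS M) (fun j => kR M j.*2.+1) (fun i x => sat M x (FBox (PAtom i.*2.+2) FBot)).

Lemma prog_fwd M a x y : prog_rel M (trp a) x y <-> prog_rel (Mfwd M) a x y.
Proof.
elim: a x y => [j|a IHa b IHb|a IHa b IHb|a IHa] x y /=.
- by [].
- split=> [[t [h1 h2]]|[t [h1 h2]]]; exists t; split; by [apply/IHa | apply/IHb].
- split=> [[h|h]|[h|h]]; by [left; apply/IHa | right; apply/IHb].
- exact: crt_iff.
Qed.

Lemma sat_fwd M phi x : sat M x (trf phi) <-> sat (Mfwd M) x phi.
Proof.
elim: phi x => [i||a IHa b IHb|a b IHb] x /=.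
- by [].
- by [].
- split=> h ha; apply/IHb; apply: h; exact/IHa.
- split=> h t ht; apply/IHb; apply: h; exact/prog_fwd.
Qed.

Definition Mbwd (M : kmodel) : kmodel :=
  KModel (kS M) (fun k x y => if odd k then kR M k./2 x y else (x = y /\ ~ kV M (k./2).-1 x)) (kV M).

Lemma prog_bwd M a x y : prog_rel (Mbwd M) (trp a) x y <-> prog_rel M a x y.
Proof.
elim: a x y => [j|a IHa b IHb|a IHa b IHb|a IHa] x y /=.
- by rewrite odd_double /= uphalf_double.
- split=> [[t [h1 h2]]|[t [h1 h2]]]; exists t; split; by [apply/IHa | apply/IHb].
- split=> [[h|h]|[h|h]]; by [left; apply/IHa | right; apply/IHb].
- exact: crt_iff.
Qed.

Lemma sat_bwd M phi x : sat (Mbwd M) x (trf phi) <-> sat M x phi.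
Proof.
elim: phi x => [i||a IHa b IHb|a b IHb] x /=.
- rewrite odd_double half_double /=; split.
  + by move=> h; apply: NNPP => hn; exact: (h x).
  + by move=> h t [_ hn].
- by [].
- split=> h ha; apply/IHb; apply: h; exact/IHa.
- split=> h t ht; apply/IHb; apply: h; exact/prog_bwd.
Qed.

Lemma valid_iff phi : pdl_valid phi <-> pdl_valid (trf phi).
Proof.
split=> h M s.
- by apply/sat_fwd; apply: h.
- by apply/sat_bwd; apply: h.
Qed.


Lemma size_pl o1 o2 : size (pl o1 o2) <= 2.
Proof. by case: o1 => [?|] //; case: o2. Qed.

Lemma run_all u : forall g a o m, exists k m' a', k <= size u * (6 * size u + 2 * size o + 8) + 1 /\
  iter k step (mk (QF g) (nseq a GDead) (map GIn u ++ map GOut o ++ nseq m GBlank))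
  = mk QH (nseq a' GDead) (map GOut (o ++ gsm_run g u) ++ nseq m' GBlank).
Proof.
elim: u => [|b u IH] g a o m.
  exists 1, m, a; split => //.
  rewrite iter1 /mk [map GIn [::]]/= cat0s cats0.
  have hd : delta (QF g) (head GBlank (map GOut o ++ nseq m GBlank)) = (QH, head GBlank (map GOut o ++ nseq m GBlank), DStay).
    by case: o => [|c o] /=; [case: m|].
  by rewrite (stepS _ _ _ _ _ _ _ hd).
have [k1 [m1 [hk1 E1]]] := round g a b u o m.
case E: (gstep g b) E1 => [[g' o1] o2] E1.
have [k2 [m2 [a2 [hk2 E2]]]] := IH g' a.+1 (o ++ pl o1 o2) m1.
exists (k2 + k1), m2, a2; split.
  move: hk2; rewrite size_cat /=; have := size_pl o1 o2; nia.
by rewrite iterD E1 E2 /= E catA.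
Qed.

Lemma read_mk o m : read_out M0 (head GBlank (map GOut o ++ nseq m GBlank) :: behead (map GOut o ++ nseq m GBlank)) = o.
Proof.
case: o => [|c o] /=; first by case: m.
congr (_ :: _); elim: o => [|d o IH] /=; first by case: m.
by rewrite IH.
Qed.


Theorem theorem3 :
  exists f : form -> form,
    poly_time_form_fun f /\
    (forall phi : form, var_free (f phi)) /\
    (forall phi : form, pdl_valid phi <-> pdl_valid (f phi)).
Proof.
exists trf; split; last by split; [exact: trf_vf | exact: valid_iff].
exists M0, 14, 2 => phi.
have [k [m' [a' [hk E]]]] := run_all (enc_form phi) GN 0 [::] 0.
exists k; split.
  move: hk; rewrite /= muln0 addn0; nia.
have hi : tm_init M0 (enc_form phi) = mk (QF GN) (nseq 0 GDead) (map GIn (enc_form phi) ++ map GOut [::] ++ nseq 0 GBlank).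
  by rewrite /tm_init /mk /= cats0; case: (map GIn (enc_form phi)).
rewrite /tm_run hi.
change (iter k (@tm_step M0)) with (iter k step).
rewrite E gsm_enc; split; [done | exact: read_mk].
Qed.
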